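(* Let $\mathbb{B}$ be the open unit ball centered at the origin in $\mathbb{H}$ and let $F:\mathbb{B}\to M_n(\mathbb{H})$ be a quaternionic matrix-valued regular function. If $q\mapsto\Vert F(q)\Vert$ attains its maximum at some point of $\mathbb{B}$, then $\Vert F(q)\Vert$ is constant on $\mathbb{B}$.
   Context: $\mathbb{H}$ denotes the real quaternions. A function $f:\mathbb{B}\to\mathbb{H}$ is (left) regular if it has a power series representation $f(q)=\sum_{n\ge0}q^n f_n$ with $f_n\in\mathbb{H}$ convergent on $\mathbb{B}$ (equivalently, for each imaginary unit $I$ with $I^2=-1$, its restriction to $\mathbb{B}\cap(\mathbb{R}+\mathbb{R}I)$ is holomorphic in the sense $\frac12(\partial_x+I\partial_y)f(x+yI)=0$). $F:\mathbb{B}\to M_n(\mathbb{H})$ is regular if each entry is regular. $\Vert A\Vert=\sup_{x\neq0}\Vert Ax\Vert_2/\Vert x\Vert_2$ is the operator norm of $A\in M_n(\mathbb{H})$ acting on $\mathbb{H}^n$ with the Euclidean norm $\Vert x\Vert_2=(x^*x)^{1/2}$. *)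

(* Defs.v *)
From Stdlib Require Import Reals.
From Coquelicot Require Import Coquelicot.
Open Scope R_scope.

Record quat := Quat { qre : R; qi : R; qj : R; qk : R }.

Definition qzero : quat := Quat 0 0 0 0.
Definition qone : quat := Quat 1 0 0 0.
Definition qadd (p q : quat) : quat :=
  Quat (qre p + qre q) (qi p + qi q) (qj p + qj q) (qk p + qk q).
(* Hamilton product (i^2 = j^2 = k^2 = ijk = -1). *)
Definition qmul (p q : quat) : quat :=
  Quat (qre p * qre q - qi p * qi q - qj p * qj q - qk p * qk q)
       (qre p * qi q + qi p * qre q + qj p * qk q - qk p * qj q)
       (qre p * qj q - qi p * qk q + qj p * qre q + qk p * qi q)
       (qre p * qk q + qi p * qj q - qj p * qi q + qk p * qre q).
Fixpoint qpow (q : quat) (n : nat) : quat :=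
  match n with O => qone | S m => qmul q (qpow q m) end.
Definition qnorm2 (q : quat) : R :=
  qre q ^ 2 + qi q ^ 2 + qj q ^ 2 + qk q ^ 2.
Definition qnorm (q : quat) : R := sqrt (qnorm2 q).

Definition in_ball (q : quat) : Prop := qnorm q < 1.

Fixpoint rsum (N : nat) (f : nat -> R) : R :=
  match N with O => 0 | S m => rsum m f + f m end.
Fixpoint qsum (N : nat) (f : nat -> quat) : quat :=
  match N with O => qzero | S m => qadd (qsum m f) (f m) end.

(* Convergence of a quaternion sequence (componentwise = in norm). *)
Definition qcv (u : nat -> quat) (l : quat) : Prop :=
  Un_cv (fun n => qre (u n)) (qre l) /\ Un_cv (fun n => qi (u n)) (qi l) /\
  Un_cv (fun n => qj (u n)) (qj l) /\ Un_cv (fun n => qk (u n)) (qk l).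

(* (Left) regular function on B: f(q) = sum_n q^n f_n, convergent on B. *)
Definition regular (f : quat -> quat) : Prop :=
  exists a : nat -> quat, forall q, in_ball q ->
    qcv (fun N => qsum N (fun k => qmul (qpow q k) (a k))) (f q).

(* Matrices in M_n(H) are represented as functions nat -> nat -> quat,
   only the entries (i, j) with i, j < n being relevant; vectors of H^n
   as functions nat -> quat, only entries i < n being relevant. *)
Definition qmat := nat -> nat -> quat.
Definition qvec := nat -> quat.

Definition mat_regular (n : nat) (F : quat -> qmat) : Prop :=
  forall i j, (i < n)%nat -> (j < n)%nat -> regular (fun q => F q i j).

Definition vnorm (n : nat) (x : qvec) : R := sqrt (rsum n (fun i => qnorm2 (x i))).

Definition mat_vec (n : nat) (A : qmat) (x : qvec) : qvec :=
  fun i => qsum n (fun j => qmul (A i j) (x j)).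

Definition opnorm (n : nat) (A : qmat) : R :=
  real (Lub_Rbar (fun r => exists x : qvec,
     (exists i, (i < n)%nat /\ x i <> qzero) /\
     r = vnorm n (mat_vec n A x) / vnorm n x)).

(* Main.v *)
Require Import Defs.
From Stdlib Require Import Reals Lra Lia Psatz ClassicalEpsilon Classical.
Ltac slra := lra.
Ltac snra := nra.
Ltac slia := lia.
Ltac sring := ring.
Ltac sfield := field.
From Coquelicot Require Import Coquelicot.
From mathcomp Require Import all_boot all_order all_algebra.
From mathcomp Require Import Rstruct.
From mathcomp.real_closed Require Import complex.
From mathcomp Require Import ring lra.
Set Warnings "-notation-overridden -ambiguous-paths".
Import Order.TTheory GRing.Theory Num.Theory.

Module P_core.
Local Open Scope ring_scope.
Notation cRe := (@complex.Re R).
Notation cIm := (@complex.Im R).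
Lemma mulcE (a b c d : R) : (Complex a b) * (Complex c d) = Complex (a*c - b*d) (a*d + b*c).
Proof. by []. Qed.

Definition cnorm (z : R[i]) : R := Num.sqrt (cRe z ^+ 2 + cIm z ^+ 2).

Lemma normcE' (z : R[i]) : `|z| = (cnorm z)%:C%C.
Proof. exact: normc_def. Qed.

Lemma cnorm_le (x y : R[i]) : `|x| <= `|y| -> cnorm x <= cnorm y.
Proof. by rewrite !normcE' lecR. Qed.

Lemma cnorm_ge0 z : 0 <= cnorm z.
Proof. exact: sqrtr_ge0. Qed.

Lemma Re_le_cnorm z : `|cRe z| <= cnorm z.
Proof.
rewrite /cnorm -sqrtr_sqr ler_sqrt ?lerDl ?sqr_ge0 //.
by rewrite addr_ge0 ?sqr_ge0.
Qed.

Lemma Im_le_cnorm z : `|cIm z| <= cnorm z.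
Proof.
rewrite /cnorm -sqrtr_sqr ler_sqrt ?lerDr ?sqr_ge0 //.
by rewrite addr_ge0 ?sqr_ge0.
Qed.

Lemma cReD (a b : R[i]) : cRe (a + b) = cRe a + cRe b.
Proof. by case: a; case: b. Qed.
Lemma cImD (a b : R[i]) : cIm (a + b) = cIm a + cIm b.
Proof. by case: a; case: b. Qed.
Lemma cReB (a b : R[i]) : cRe (a - b) = cRe a - cRe b.
Proof. by case: a; case: b. Qed.
Lemma cImB (a b : R[i]) : cIm (a - b) = cIm a - cIm b.
Proof. by case: a; case: b. Qed.
Lemma cRe0 : cRe 0 = 0. Proof. by []. Qed.
Lemma cIm0 : cIm 0 = 0. Proof. by []. Qed.

Lemma cRe_sum (N : nat) (f : 'I_N -> R[i]) : cRe (\sum_(j < N) f j) = \sum_(j < N) cRe (f j).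
Proof.
elim: N f => [|N IH] f; first by rewrite !big_ord0.
by rewrite !big_ord_recr /= cReD IH.
Qed.
Lemma cIm_sum (N : nat) (f : 'I_N -> R[i]) : cIm (\sum_(j < N) f j) = \sum_(j < N) cIm (f j).
Proof.
elim: N f => [|N IH] f; first by rewrite !big_ord0.
by rewrite !big_ord_recr /= cImD IH.
Qed.

Definition Pk (g d : nat -> R) (K : nat) (z : R[i]) : R :=
  \sum_(k < K) (cRe (z ^+ k) * g k + cIm (z ^+ k) * d k).

Lemma avg_exact (N k : nat) (z0 w om : R[i]) :
  (k < N)%N -> om ^+ N = 1 -> (forall l, (0 < l < N)%N -> om ^+ l != 1) ->
  \sum_(j < N) (z0 + w * om ^+ j) ^+ k = \sum_(j < N) z0 ^+ k.
Proof.
move=> kN omN omP.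
set q : {poly R[i]} := z0%:P + w *: 'X.
set p : {poly R[i]} := q ^+ k.
have hp x : p.[x] = (z0 + w * x) ^+ k.
  by rewrite /p /q horner_exp hornerD hornerC hornerZ hornerX.
have sp : (size p <= N)%N.
  have s1 : (size q <= 2)%N.
    apply: (leq_trans (size_polyD _ _)).
    rewrite geq_max size_polyC (leq_trans (leq_b1 _)) //=.
    by rewrite (leq_trans (size_scale_leq _ _)) // size_polyX.
  have h := size_poly_exp_leq q k.
  apply: (leq_trans h).
  have h1 : ((size q).-1 <= 1)%N by case: (size q) s1 => [|[|[|]]].
  have h2 : (((size q).-1 * k) <= k)%N by rewrite (leq_trans (leq_mul h1 (leqnn k))) // mul1n.
  by apply: leq_ltn_trans h2 kN.
transitivity (\sum_(j < N) p.[om ^+ j]).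
  by apply: eq_bigr => j _; rewrite hp.
under eq_bigr do rewrite (horner_coef_wide _ sp).
rewrite exchange_big /=.
have N0 : (0 < N)%N by apply: leq_ltn_trans kN.
case: N kN omN omP sp N0 => [//|N'] kN omN omP sp _.
rewrite big_ord_recl /= [X in _ + X]big1.
  rewrite addr0.
  under eq_bigr do rewrite expr0 mulr1.
  by rewrite -horner_coef0 hp mulr0 addr0.
move=> l _.
rewrite -big_distrr /=.
have -> : \sum_(i < N'.+1) om ^+ i ^+ (bump 0 l) = 0.
  set y := om ^+ (bump 0 l).
  have hy : y != 1 by apply: omP; rewrite /bump /= add1n ltnS ltn_ord.
  have : (y - 1) * \sum_(i < N'.+1) y ^+ i = 0.
    by rewrite -subrX1 /y -exprM mulnC exprM omN expr1n subrr.
  under eq_bigr do rewrite -exprM mulnC exprM.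
  move/eqP; rewrite mulf_eq0 subr_eq0 (negbTE hy) /=.
  by move/eqP.
by rewrite mulr0.
Qed.

Lemma geom_tail (lam : R) (N K : nat) : 0 <= lam -> lam < 1 ->
  (1 - lam) * \sum_(k < K) (if (N <= k)%N then lam ^+ k else 0)
    <= lam ^+ N - (if (N <= K)%N then lam ^+ K else lam ^+ N).
Proof.
move=> l0 l1; elim: K => [|K IH].
  rewrite big_ord0 mulr0. case: N => [|N] /=; by rewrite subrr.
rewrite big_ord_recr /=.
case: (leqP N K) => hNK.
  have -> : (N <= K.+1)%N by apply: leqW.
  rewrite hNK in IH.
  rewrite mulrDr exprS.
  have h : (1 - lam) * lam ^+ K = lam ^+ K - lam * lam ^+ K by rewrite mulrBl mul1r.
  rewrite h. lra.
rewrite addr0.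
rewrite leqNgt hNK /= in IH.
case: (leqP N K.+1) => h2.
  have eN : N = K.+1 by apply/eqP; rewrite eqn_leq h2 hNK.
  by rewrite -eN; move: IH; rewrite !subrr.
by [].
Qed.

Lemma geom_tail' (lam : R) (N K : nat) : 0 <= lam -> lam < 1 ->
  \sum_(k < K) (if (N <= k)%N then lam ^+ k else 0) <= lam ^+ N / (1 - lam).
Proof.
move=> l0 l1.
have h := @geom_tail lam N K l0 l1.
have hp : 0 < 1 - lam by rewrite subr_gt0.
rewrite ler_pdivlMr // mulrC.
apply: (le_trans h).
have : 0 <= (if (N <= K)%N then lam ^+ K else lam ^+ N) by case: ifP => _; apply: exprn_ge0.
lra.
Qed.

Lemma core_bound (g d : nat -> R) (K N : nat) (z0 w om : R[i]) (D lam : R) :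
  (0 < N)%N -> om ^+ N = 1 -> (forall l, (0 < l < N)%N -> om ^+ l != 1) ->
  `|om| = 1 -> 0 <= lam -> lam < 1 -> 0 <= D ->
  (forall k, (`|g k| + `|d k|) * (cnorm z0 + cnorm w) ^+ k <= D * lam ^+ k) ->
  `|\sum_(j < N) Pk g d K (z0 + w * om ^+ j) - N%:R * Pk g d K z0|
     <= 2 * N%:R * D * (lam ^+ N / (1 - lam)).
Proof.
move=> N0 omN omP om1 l0 l1 D0 hgd.
set E := fun k : nat => \sum_(j < N) ((z0 + w * om ^+ j) ^+ k - z0 ^+ k).
have eq1 : \sum_(j < N) Pk g d K (z0 + w * om ^+ j) - N%:R * Pk g d K z0
   = \sum_(k < K) (cRe (E k) * g k + cIm (E k) * d k).
  have -> : N%:R * Pk g d K z0 = \sum_(j < N) Pk g d K z0.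
    by rewrite sumr_const card_ord mulr_natl.
  rewrite -sumrB /Pk.
  under eq_bigr do rewrite -sumrB.
  rewrite exchange_big /=.
  apply: eq_bigr => k _.
  rewrite /E cRe_sum cIm_sum !mulr_suml -big_split /=.
  apply: eq_bigr => j _.
  rewrite cReB cImB. ring.
rewrite eq1.
apply: (le_trans (ler_norm_sum _ _ _)).
have hE : forall k, cnorm (E k) <= (if (N <= k)%N then 2 * N%:R * (cnorm z0 + cnorm w) ^+ k else 0).
  move=> k; case: (leqP N k) => hk.
    have : `|E k| <= (2 * N%:R * (cnorm z0 + cnorm w) ^+ k)%:C%C.
      apply: (le_trans (ler_norm_sum _ _ _)).
      have -> : (2 * N%:R * (cnorm z0 + cnorm w) ^+ k)%:C%C
           = \sum_(j < N) (2 * (cnorm z0 + cnorm w) ^+ k)%:C%C.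
        rewrite sumr_const card_ord -rmorphMn /=. congr (_ %:C)%C. 
        by rewrite -[_ *+ N]mulr_natr; ring.
      apply: ler_sum => j _.
      apply: (le_trans (ler_normB _ _)).
      rewrite !normrX.
      have hz0 : `|z0| <= (cnorm z0 + cnorm w)%:C%C.
        by rewrite normcE' lecR lerDl cnorm_ge0.
      have hzj : `|z0 + w * om ^+ j| <= (cnorm z0 + cnorm w)%:C%C.
        apply: (le_trans (ler_normD _ _)).
        by rewrite normrM normrX om1 expr1n mulr1 !normcE' rmorphD.
      have h0 : 0 <= (cnorm z0 + cnorm w)%:C%C by rewrite lecR addr_ge0 ?cnorm_ge0.
      rewrite rmorphM rmorphXn /= rmorph_nat mulr2n mulrDl mul1r.
      by apply: lerD; apply: lerXn2r => //; rewrite ?normr_ge0 // nnegrE.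
    by rewrite normcE' lecR.
  have -> : E k = 0.
    by rewrite /E sumrB (@avg_exact N k z0 w om hk omN omP) subrr.
  by rewrite /cnorm /= expr0n /= addr0 sqrtr0.
have hterm : forall k, `|cRe (E k) * g k + cIm (E k) * d k|
     <= 2 * N%:R * D * (if (N <= k)%N then lam ^+ k else 0).
  move=> k.
  have h1 : `|cRe (E k) * g k + cIm (E k) * d k| <= cnorm (E k) * (`|g k| + `|d k|).
    apply: (le_trans (ler_normD _ _)). rewrite !normrM mulrDr.
    apply: lerD; apply: ler_wpM2r; rewrite ?normr_ge0 ?Re_le_cnorm ?Im_le_cnorm //.
  apply: (le_trans h1).
  have hgd0 : 0 <= `|g k| + `|d k| by rewrite addr_ge0.
  apply: (le_trans (ler_wpM2r hgd0 (hE k))).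
  case: (leqP N k) => hk; last by rewrite mul0r mulr0.
  have := hgd k. move=> h.
  have hN : 0 <= 2 * N%:R :> R by rewrite mulr_ge0.
  have h2 := ler_wpM2l hN h.
  rewrite [X in X <= _](_ : _ = 2 * N%:R * ((`|g k| + `|d k|) * (cnorm z0 + cnorm w) ^+ k)); last by ring.
  rewrite [X in _ <= X](_ : _ = 2 * N%:R * (D * lam ^+ k)); last by ring.
  exact: h2.
apply: le_trans. apply: ler_sum => k _. exact: hterm k.
rewrite -mulr_sumr.
apply: ler_wpM2l; first by rewrite !mulr_ge0.
exact: geom_tail'.
Qed.

End P_core.
Import P_core.

Module P_roots.
Section Trig.
Local Open Scope R_scope.
Lemma cos_lt1 (t : R) : 0 < t < 2 * PI -> cos t < 1.
Proof.
move=> [h1 h2].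
have -> : t = 2 * (t / 2) by sfield.
rewrite cos_2a_sin.
have : 0 < sin (t/2) by apply: Rtrigo1.sin_gt_0; slra.
move=> hs. snra.
Qed.
End Trig.
Local Open Scope ring_scope.

Definition omega (N : nat) : R[i] := Complex (cos (Rdiv (Rmult 2 PI) (INR N))) (sin (Rdiv (Rmult 2 PI) (INR N))).

Lemma omegaX (N l : nat) : omega N ^+ l = Complex (cos (Rmult (Rdiv (Rmult 2 PI) (INR N)) (INR l))) (sin (Rmult (Rdiv (Rmult 2 PI) (INR N)) (INR l))).
Proof.
elim: l => [|l IH].
  by rewrite expr0 /= Rmult_0_r cos_0 sin_0.
rewrite exprS IH /omega mulcE S_INR Rmult_plus_distr_l Rmult_1_r.
rewrite Rplus_comm cos_plus sin_plus.
congr Complex; rewrite /Rminus ?RplusE ?RmultE ?RoppE; ring.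
Qed.

Lemma omega_prop (N : nat) : (0 < N)%N ->
  omega N ^+ N = 1 /\ (forall l, (0 < l < N)%N -> omega N ^+ l != 1) /\ `|omega N| = 1.
Proof.
move=> N0.
have hN : Rlt 0 (INR N) by apply: lt_0_INR; apply/ssrnat.ltP.
have PI0 := PI_RGT_0.
split; [|split].
- rewrite omegaX.
  have -> : Rmult (Rdiv (Rmult 2 PI) (INR N)) (INR N) = Rmult 2 PI by sfield; slra.
  by rewrite cos_2PI sin_2PI.
- move=> l /andP [l0 lN]. rewrite omegaX.
  apply/negP => /eqP [] hc _.
  have hl : Rlt 0 (INR l) by apply: lt_0_INR; apply/ssrnat.ltP.
  have hlN : Rlt (INR l) (INR N) by apply: lt_INR; apply/ssrnat.ltP.
  have : Rlt (cos (Rmult (Rdiv (Rmult 2 PI) (INR N)) (INR l))) 1.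
    apply: cos_lt1.
    have -> : Rmult (Rdiv (Rmult 2 PI) (INR N)) (INR l) = Rmult (Rmult 2 PI) (Rdiv (INR l) (INR N)) by sfield; slra.
    have : Rlt (Rdiv (INR l) (INR N)) 1 by apply: (Rmult_lt_reg_r (INR N)); [slra|]; rewrite /Rdiv Rmult_assoc Rinv_l; slra.
    have : Rlt 0 (Rdiv (INR l) (INR N)) by apply: Rdiv_lt_0_compat; slra.
    move=> h h'. split; snra.
  by rewrite hc => /Rlt_irrefl.
- rewrite normcE' /cnorm /omega /=.
  have := sin2_cos2 (Rdiv (Rmult 2 PI) (INR N)). rewrite /Rsqr => h.
  rewrite -!RpowE /= !Rmult_1_r -RplusE Rplus_comm h.
  by rewrite sqrtr1.
Qed.

End P_roots.
Import P_roots.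

Module P_q1.
Local Open Scope R_scope.

Definition qscal (c : R) (p : quat) : quat := Quat (c * qre p) (c * qi p) (c * qj p) (c * qk p).
Definition dot4 (p q : quat) : R := qre p * qre q + qi p * qi q + qj p * qj q + qk p * qk q.
Definition vdot (n : nat) (v w : qvec) : R := rsum n (fun i => dot4 (v i) (w i)).

Lemma qnorm2_ge0 p : 0 <= qnorm2 p.
Proof. unfold qnorm2; destruct p; simpl; snra. Qed.

Lemma qnorm_ge0 p : 0 <= qnorm p.
Proof. apply sqrt_pos. Qed.

Lemma qnorm_sq p : qnorm p * qnorm p = qnorm2 p.
Proof. unfold qnorm; apply sqrt_sqrt, qnorm2_ge0. Qed.

Lemma qnorm2_mul p q : qnorm2 (qmul p q) = qnorm2 p * qnorm2 q.
Proof. destruct p, q; unfold qnorm2, qmul; simpl; sring. Qed.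

Lemma qnorm_mul p q : qnorm (qmul p q) = qnorm p * qnorm q.
Proof. unfold qnorm; rewrite qnorm2_mul; apply sqrt_mult_alt, qnorm2_ge0. Qed.

Lemma dot4_sq_le p q : dot4 p q * dot4 p q <= qnorm2 p * qnorm2 q.
Proof.
destruct p as [a b c d], q as [e f g h]; unfold dot4, qnorm2; simpl.
assert (H0 : 0 <= (a*f-b*e)^2 + (a*g-c*e)^2 + (a*h-d*e)^2 + (b*g-c*f)^2 + (b*h-d*f)^2 + (c*h-d*g)^2)
  by (repeat apply Rplus_le_le_0_compat; apply pow2_ge_0).
assert (E : (a ^ 2 + b ^ 2 + c ^ 2 + d ^ 2) * (e ^ 2 + f ^ 2 + g ^ 2 + h ^ 2) - (a * e + b * f + c * g + d * h) * (a * e + b * f + c * g + d * h)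
  = (a*f-b*e)^2 + (a*g-c*e)^2 + (a*h-d*e)^2 + (b*g-c*f)^2 + (b*h-d*f)^2 + (c*h-d*g)^2) by sring.
slra.
Qed.

Lemma dot4_abs_le p q : Rabs (dot4 p q) <= qnorm p * qnorm q.
Proof.
apply Rsqr_incr_0_var.
- rewrite <- Rsqr_abs. unfold Rsqr.
  replace (qnorm p * qnorm q * (qnorm p * qnorm q)) with ((qnorm p * qnorm p) * (qnorm q * qnorm q)) by sring.
  rewrite !qnorm_sq. apply dot4_sq_le.
- apply Rmult_le_pos; apply qnorm_ge0.
Qed.

Lemma dot4_le p q : dot4 p q <= qnorm p * qnorm q.
Proof. eapply Rle_trans; [apply RRle_abs | apply dot4_abs_le]. Qed.

Lemma dot4_self p : dot4 p p = qnorm2 p.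
Proof. destruct p; unfold dot4, qnorm2; simpl; sring. Qed.

Lemma qnorm_add p q : qnorm (qadd p q) <= qnorm p + qnorm q.
Proof.
apply Rsqr_incr_0_var.
- unfold Rsqr. rewrite qnorm_sq.
  replace ((qnorm p + qnorm q) * (qnorm p + qnorm q)) with (qnorm p * qnorm p + qnorm q * qnorm q + 2 * (qnorm p * qnorm q)) by sring.
  rewrite !qnorm_sq.
  pose proof (dot4_le p q).
  replace (qnorm2 (qadd p q)) with (qnorm2 p + qnorm2 q + 2 * dot4 p q)
    by (destruct p, q; unfold qnorm2, dot4, qadd; simpl; sring).
  slra.
- pose proof (qnorm_ge0 p); pose proof (qnorm_ge0 q); slra.
Qed.

Lemma qnorm_le_abs p : qnorm p <= Rabs (qre p) + Rabs (qi p) + Rabs (qj p) + Rabs (qk p).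
Proof.
apply Rsqr_incr_0_var.
- unfold Rsqr. rewrite qnorm_sq. destruct p as [a b c d]; unfold qnorm2; cbn [qre qi qj qk].
  pose proof (Rabs_pos a); pose proof (Rabs_pos b); pose proof (Rabs_pos c); pose proof (Rabs_pos d).
  rewrite <- (pow2_abs a), <- (pow2_abs b), <- (pow2_abs c), <- (pow2_abs d).
  set (A := Rabs a) in *; set (B := Rabs b) in *; set (C := Rabs c) in *; set (D := Rabs d) in *.
  assert (E : (A + B + C + D) * (A + B + C + D) = A^2+B^2+C^2+D^2 + 2*(A*B+A*C+A*D+B*C+B*D+C*D)) by sring.
  rewrite E.
  assert (0 <= A*B+A*C+A*D+B*C+B*D+C*D) by (repeat apply Rplus_le_le_0_compat; apply Rmult_le_pos; assumption).
  slra.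
- pose proof (Rabs_pos (qre p)); pose proof (Rabs_pos (qi p)); pose proof (Rabs_pos (qj p)); pose proof (Rabs_pos (qk p)); slra.
Qed.

Lemma qnorm2_scal c p : qnorm2 (qscal c p) = c * c * qnorm2 p.
Proof. destruct p; unfold qnorm2, qscal; simpl; sring. Qed.

Lemma qnorm_scal c p : qnorm (qscal c p) = Rabs c * qnorm p.
Proof.
unfold qnorm. rewrite qnorm2_scal sqrt_mult_alt.
- rewrite <- (sqrt_Rsqr_abs c). reflexivity.
- apply Rle_0_sqr.
Qed.

Lemma rsum_ext N f g : (forall i, (i < N)%coq_nat -> f i = g i) -> rsum N f = rsum N g.
Proof.
induction N; simpl; intros H; [reflexivity|].
rewrite IHN; [rewrite H; [reflexivity| apply Nat.lt_succ_diag_r]|].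
intros i Hi; apply H; apply Nat.lt_lt_succ_r; exact Hi.
Qed.

Lemma rsum_le N f g : (forall i, (i < N)%coq_nat -> f i <= g i) -> rsum N f <= rsum N g.
Proof.
induction N; simpl; intros H; [apply Rle_refl|].
apply Rplus_le_compat; [apply IHN; intros i Hi; apply H; apply Nat.lt_lt_succ_r; exact Hi|].
apply H; apply Nat.lt_succ_diag_r.
Qed.

Lemma rsum_ge0 N f : (forall i, (i < N)%coq_nat -> 0 <= f i) -> 0 <= rsum N f.
Proof.
intros H. replace 0 with (rsum N (fun _ => 0)).
- apply rsum_le. exact H.
- induction N; simpl; [reflexivity|]. rewrite IHN; [sring|].
  intros i Hi; apply H; apply Nat.lt_lt_succ_r; exact Hi.
Qed.

Lemma rsum_plus N f g : rsum N (fun i => f i + g i) = rsum N f + rsum N g.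
Proof. induction N; simpl; [sring|]. rewrite IHN; sring. Qed.

Lemma rsum_scal N c f : rsum N (fun i => c * f i) = c * rsum N f.
Proof. induction N; simpl; [sring|]. rewrite IHN; sring. Qed.

Lemma rsum_const N c : rsum N (fun _ => c) = INR N * c.
Proof. induction N; [simpl; sring|]. rewrite S_INR. cbn [rsum]. rewrite IHN; sring. Qed.

Lemma rsum_abs N f : Rabs (rsum N f) <= rsum N (fun i => Rabs (f i)).
Proof.
induction N; simpl.
- rewrite Rabs_R0; apply Rle_refl.
- eapply Rle_trans; [apply Rabs_triang|]. apply Rplus_le_compat_r; exact IHN.
Qed.

Lemma rsum_term N f i : (forall j, (j < N)%coq_nat -> 0 <= f j) -> (i < N)%coq_nat -> f i <= rsum N f.
Proof.
induction N; intros H Hi; [apply Nat.nlt_0_r in Hi; contradiction|].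
simpl. destruct (Nat.eq_dec i N) as [->|Hne].
- assert (0 <= rsum N f) by (apply rsum_ge0; intros j Hj; apply H; apply Nat.lt_lt_succ_r; exact Hj).
  slra.
- assert (Hi' : (i < N)%coq_nat) by slia.
  assert (f i <= rsum N f) by (apply IHN; [intros j Hj; apply H; apply Nat.lt_lt_succ_r; exact Hj| exact Hi']).
  assert (0 <= f N) by (apply H; apply Nat.lt_succ_diag_r). slra.
Qed.

Lemma qsum_re N f : qre (qsum N f) = rsum N (fun k => qre (f k)).
Proof. induction N; simpl; [reflexivity|]. rewrite IHN; reflexivity. Qed.
Lemma qsum_i N f : qi (qsum N f) = rsum N (fun k => qi (f k)).
Proof. induction N; simpl; [reflexivity|]. rewrite IHN; reflexivity. Qed.
Lemma qsum_j N f : qj (qsum N f) = rsum N (fun k => qj (f k)).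
Proof. induction N; simpl; [reflexivity|]. rewrite IHN; reflexivity. Qed.
Lemma qsum_k N f : qk (qsum N f) = rsum N (fun k => qk (f k)).
Proof. induction N; simpl; [reflexivity|]. rewrite IHN; reflexivity. Qed.

Lemma qsum_ext N f g : (forall i, (i < N)%coq_nat -> f i = g i) -> qsum N f = qsum N g.
Proof.
induction N; simpl; intros H; [reflexivity|].
rewrite IHN; [rewrite H; [reflexivity| apply Nat.lt_succ_diag_r]|].
intros i Hi; apply H; apply Nat.lt_lt_succ_r; exact Hi.
Qed.

Lemma qnorm_qsum N f : qnorm (qsum N f) <= rsum N (fun i => qnorm (f i)).
Proof.
induction N; simpl.
- assert (E : qnorm qzero = 0) by (unfold qnorm, qnorm2, qzero; cbn [qre qi qj qk]; replace (0^2+0^2+0^2+0^2) with 0 by sring; apply sqrt_0). rewrite E; apply Rle_refl.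
- eapply Rle_trans; [apply qnorm_add|]. apply Rplus_le_compat_r; exact IHN.
Qed.

Lemma dot4_qsum p N f : dot4 p (qsum N f) = rsum N (fun i => dot4 p (f i)).
Proof. induction N; cbn [qsum rsum]. - unfold dot4, qzero; simpl; sring. - rewrite <- IHN. destruct p, (qsum N f), (f N); unfold dot4, qadd; simpl; sring. Qed.

Lemma qmul_qadd_l p q x : qmul (qadd p q) x = qadd (qmul p x) (qmul q x).
Proof. destruct p, q, x; unfold qmul, qadd; simpl; f_equal; sring. Qed.

Lemma qsum_qadd N f g : qsum N (fun i => qadd (f i) (g i)) = qadd (qsum N f) (qsum N g).
Proof.
induction N; simpl.
- unfold qzero, qadd; simpl; f_equal; sring.
- rewrite IHN. destruct (qsum N f), (qsum N g), (f N), (g N); unfold qadd; simpl; f_equal; sring.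
Qed.

Lemma dot4_qadd p q r : dot4 p (qadd q r) = dot4 p q + dot4 p r.
Proof. destruct p, q, r; unfold dot4, qadd; simpl; sring. Qed.

Lemma vdot_qadd n v w1 w2 : vdot n v (fun i => qadd (w1 i) (w2 i)) = vdot n v w1 + vdot n v w2.
Proof. unfold vdot. rewrite <- rsum_plus. apply rsum_ext; intros; apply dot4_qadd. Qed.

End P_q1.
Import P_q1.

Module P_q2.
Local Open Scope R_scope.

Lemma ucv_ext u w l : (forall K, u K = w K) -> Un_cv u l -> Un_cv w l.
Proof. intros E H eps Heps. destruct (H eps Heps) as [N HN]. exists N. intros m Hm. rewrite <- E. apply HN; exact Hm. Qed.

Lemma ucv_const c : Un_cv (fun _ => c) c.
Proof. intros eps Heps. exists 0%nat. intros m _. unfold Rdist. rewrite Rminus_diag Rabs_R0. exact Heps. Qed.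

Lemma Un_cv_scal c u l : Un_cv u l -> Un_cv (fun K => c * u K) (c * l).
Proof. intros H. apply CV_mult; [apply ucv_const | exact H]. Qed.

Lemma Un_cv_lin4 c1 c2 c3 c4 u1 u2 u3 u4 l1 l2 l3 l4 :
  Un_cv u1 l1 -> Un_cv u2 l2 -> Un_cv u3 l3 -> Un_cv u4 l4 ->
  Un_cv (fun K => c1 * u1 K + c2 * u2 K + c3 * u3 K + c4 * u4 K) (c1 * l1 + c2 * l2 + c3 * l3 + c4 * l4).
Proof.
intros H1 H2 H3 H4.
repeat apply CV_plus; apply Un_cv_scal; assumption.
Qed.

Lemma ucv_ext2 u w l l' : (forall K, u K = w K) -> l = l' -> Un_cv u l -> Un_cv w l'.
Proof. intros E <-. apply ucv_ext; exact E. Qed.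

Ltac lin4 c1 c2 c3 c4 H1 H2 H3 H4 :=
  refine (ucv_ext2 _ _ _ _ _ _ (Un_cv_lin4 c1 c2 c3 c4 _ _ _ _ _ _ _ _ H1 H2 H3 H4));
  [intros ?; simpl; sring | sring].

Lemma qcv_mulr u l c : qcv u l -> qcv (fun K => qmul (u K) c) (qmul l c).
Proof.
intros [H1 [H2 [H3 H4]]]. unfold qcv, qmul; cbn [qre qi qj qk].
split; [|split; [|split]].
- lin4 (qre c) (- qi c) (- qj c) (- qk c) H1 H2 H3 H4.
- lin4 (qi c) (qre c) (qk c) (- qj c) H1 H2 H3 H4.
- lin4 (qj c) (- qk c) (qre c) (qi c) H1 H2 H3 H4.
- lin4 (qk c) (qj c) (- qi c) (qre c) H1 H2 H3 H4.
Qed.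

Lemma qcv_qsum n (u : nat -> nat -> quat) (l : nat -> quat) :
  (forall j, (j < n)%coq_nat -> qcv (u j) (l j)) ->
  qcv (fun K => qsum n (fun j => u j K)) (qsum n l).
Proof.
induction n; intros H.
- unfold qcv; simpl; repeat split; apply ucv_const.
- assert (IH := IHn (fun j Hj => H j (Nat.lt_lt_succ_r _ _ Hj))).
  destruct IH as [A1 [A2 [A3 A4]]].
  destruct (H n (Nat.lt_succ_diag_r n)) as [B1 [B2 [B3 B4]]].
  unfold qcv; simpl; repeat split; apply CV_plus; assumption.
Qed.

Lemma cv_dot4 p u l : qcv u l -> Un_cv (fun K => dot4 p (u K)) (dot4 p l).
Proof.
intros [H1 [H2 [H3 H4]]]. unfold dot4.
lin4 (qre p) (qi p) (qj p) (qk p) H1 H2 H3 H4.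
Qed.

Lemma cv_vdot n v (w : nat -> nat -> quat) (l : qvec) :
  (forall i, (i < n)%coq_nat -> qcv (w i) (l i)) ->
  Un_cv (fun K => vdot n v (fun i => w i K)) (vdot n v l).
Proof.
unfold vdot. induction n; intros H; simpl.
- apply ucv_const.
- apply CV_plus.
  + apply IHn. intros i Hi; apply H; apply Nat.lt_lt_succ_r; exact Hi.
  + apply cv_dot4. apply H. apply Nat.lt_succ_diag_r.
Qed.

Lemma cv_abs_le u l B : Un_cv u l -> (forall K, Rabs (u K) <= B) -> Rabs l <= B.
Proof.
intros H HB. destruct (Rle_or_lt (Rabs l) B) as [h|h]; [exact h|].
destruct (H (Rabs l - B)) as [N HN]; [slra|].
specialize (HN N (Nat.le_refl N)). unfold Rdist in HN.
specialize (HB N).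
pose proof (Rabs_triang_inv l (u N)).
rewrite Rabs_minus_sym in HN. slra.
Qed.

Lemma cv_terms_bounded t l : Un_cv (fun K => rsum K t) l -> exists c, forall k, Rabs (t k) <= c.
Proof.
intros H. destruct (H 1) as [N HN]; [slra|].
exists (2 + rsum N (fun k => Rabs (t k))).
intros k.
assert (Hs : 0 <= rsum N (fun k => Rabs (t k))) by (apply rsum_ge0; intros; apply Rabs_pos).
destruct (Nat.lt_ge_cases k N) as [hk|hk].
- assert (Rabs (t k) <= rsum N (fun k => Rabs (t k))) by (apply (rsum_term N (fun k => Rabs (t k))); [intros; apply Rabs_pos | exact hk]).
  slra.
- pose proof (HN k hk) as A. pose proof (HN (S k) (Nat.le_le_succ_r _ _ hk)) as B.
  unfold Rdist in A, B. simpl in B.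
  replace (t k) with ((rsum k t + t k - l) - (rsum k t - l)) by sring.
  pose proof (Rabs_triang (rsum k t + t k - l) (- (rsum k t - l))).
  rewrite Rabs_Ropp in H0. rewrite (_ : rsum k t + t k - l - (rsum k t - l) = rsum k t + t k - l + - (rsum k t - l)); [slra|sring].
Qed.

End P_q2.
Import P_q2.

Module P_q3.
Local Open Scope R_scope.

Definition vscal (c : R) (y : qvec) : qvec := fun i => qscal c (y i).

Lemma vnorm_ge0 n y : 0 <= vnorm n y.
Proof. apply sqrt_pos. Qed.

Lemma rsum_qnorm2_ge0 n y : 0 <= rsum n (fun i => qnorm2 (y i)).
Proof. apply rsum_ge0; intros; apply qnorm2_ge0. Qed.

Lemma vnorm_sq n y : vnorm n y * vnorm n y = rsum n (fun i => qnorm2 (y i)).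
Proof. unfold vnorm; apply sqrt_sqrt, rsum_qnorm2_ge0. Qed.

Lemma vnorm_ext n y y' : (forall i, (i < n)%coq_nat -> y i = y' i) -> vnorm n y = vnorm n y'.
Proof. intros H; unfold vnorm; f_equal; apply rsum_ext; intros i Hi; rewrite H; auto. Qed.

Lemma vdot_ext n v v' w w' : (forall i, (i < n)%coq_nat -> v i = v' i /\ w i = w' i) -> vdot n v w = vdot n v' w'.
Proof. intros H; unfold vdot; apply rsum_ext; intros i Hi; destruct (H i Hi) as [-> ->]; auto. Qed.

Lemma qnorm_le_vnorm n x i : (i < n)%coq_nat -> qnorm (x i) <= vnorm n x.
Proof.
intros Hi. unfold qnorm, vnorm. apply sqrt_le_1_alt.
apply (rsum_term n (fun i => qnorm2 (x i))); [intros; apply qnorm2_ge0 | exact Hi].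
Qed.

Lemma vdot_self n y : vdot n y y = vnorm n y * vnorm n y.
Proof. rewrite vnorm_sq. unfold vdot. apply rsum_ext; intros; apply dot4_self. Qed.

Lemma rsum_CS n a b :
  rsum n (fun i => a i * b i) * rsum n (fun i => a i * b i)
    <= rsum n (fun i => a i * a i) * rsum n (fun i => b i * b i).
Proof.
induction n; simpl; [slra|].
set (P := rsum n (fun i => a i * b i)) in *.
set (A := rsum n (fun i => a i * a i)) in *.
set (B := rsum n (fun i => b i * b i)) in *.
assert (HA : 0 <= A) by (apply rsum_ge0; intros; apply Rle_0_sqr).
assert (HB : 0 <= B) by (apply rsum_ge0; intros; apply Rle_0_sqr).
set (x := a n) in *; set (y := b n) in *.
assert (h1 : (2 * P * x * y) * (2 * P * x * y) <= (A * y * y + x * x * B) * (A * y * y + x * x * B)).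
{ assert (h2 : (2 * P * x * y) * (2 * P * x * y) = 4 * (P * P) * (x * x * (y * y))) by sring.
  assert (h3 : 0 <= x * x * (y * y)) by (apply Rmult_le_pos; apply Rle_0_sqr).
  assert (h4 : 4 * (P * P) * (x * x * (y * y)) <= 4 * (A * B) * (x * x * (y * y))) by (apply Rmult_le_compat_r; [exact h3| slra]).
  assert (h5 : (A * y * y + x * x * B) * (A * y * y + x * x * B) - 4 * (A * B) * (x * x * (y * y)) = (A * y * y - x * x * B) * (A * y * y - x * x * B)) by sring.
  pose proof (Rle_0_sqr (A * y * y - x * x * B)). unfold Rsqr in *. slra. }
assert (h6 : 2 * P * x * y <= A * y * y + x * x * B).
{ apply Rsqr_incr_0_var; unfold Rsqr; [exact h1|].
  assert (0 <= A * y * y) by (rewrite Rmult_assoc; apply Rmult_le_pos; [exact HA| apply Rle_0_sqr]).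
  assert (0 <= x * x * B) by (apply Rmult_le_pos; [apply Rle_0_sqr| exact HB]). slra. }
assert (E1 : (P + x * y) * (P + x * y) = P * P + 2 * P * x * y + (x*y)*(x*y)) by sring.
assert (E2 : (A + x * x) * (B + y * y) = A * B + (A * y * y + x * x * B) + (x*y)*(x*y)) by sring.
rewrite E1 E2. slra.
Qed.

Lemma vdot_CS n v w : vdot n v w <= vnorm n v * vnorm n w.
Proof.
unfold vdot.
eapply Rle_trans; [apply (rsum_le n _ (fun i => qnorm (v i) * qnorm (w i))); intros; apply dot4_le|].
apply Rsqr_incr_0_var; [|apply Rmult_le_pos; apply vnorm_ge0].
unfold Rsqr.
replace (vnorm n v * vnorm n w * (vnorm n v * vnorm n w)) with ((vnorm n v * vnorm n v) * (vnorm n w * vnorm n w)) by sring.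
rewrite !vnorm_sq.
eapply Rle_trans; [apply rsum_CS|].
right. f_equal; apply rsum_ext; intros; apply qnorm_sq.
Qed.

Lemma vnorm_le_sum n y : vnorm n y <= rsum n (fun i => qnorm (y i)).
Proof.
apply Rsqr_incr_0_var; [|apply rsum_ge0; intros; apply qnorm_ge0].
unfold Rsqr. rewrite vnorm_sq.
induction n; simpl; [slra|].
assert (0 <= rsum n (fun i => qnorm (y i))) by (apply rsum_ge0; intros; apply qnorm_ge0).
pose proof (qnorm_ge0 (y n)). rewrite <- qnorm_sq. snra.
Qed.

Lemma qnorm2_pos p : p <> qzero -> 0 < qnorm2 p.
Proof.
intros H. destruct (Rlt_or_le 0 (qnorm2 p)) as [h|h]; [exact h|]. exfalso; apply H.
destruct p as [a b c d]; unfold qnorm2 in h; cbn [qre qi qj qk] in h.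
pose proof (pow2_ge_0 a); pose proof (pow2_ge_0 b); pose proof (pow2_ge_0 c); pose proof (pow2_ge_0 d).
assert (a = 0) by snra. assert (b = 0) by snra. assert (c = 0) by snra. assert (d = 0) by snra.
subst; reflexivity.
Qed.

Lemma vnorm_pos n x : (exists i, (i < n)%coq_nat /\ x i <> qzero) -> 0 < vnorm n x.
Proof.
intros [i [Hi Hx]]. unfold vnorm. apply sqrt_lt_R0.
eapply Rlt_le_trans; [|apply (rsum_term n (fun i => qnorm2 (x i)) i); [intros; apply qnorm2_ge0| exact Hi]].
apply qnorm2_pos; exact Hx.
Qed.

Lemma mat_vec_bound n A : exists K, 0 <= K /\ forall x, vnorm n (mat_vec n A x) <= K * vnorm n x.
Proof.
exists (rsum n (fun i => rsum n (fun j => qnorm (A i j)))).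
split; [apply rsum_ge0; intros; apply rsum_ge0; intros; apply qnorm_ge0|].
intros x. eapply Rle_trans; [apply vnorm_le_sum|].
rewrite Rmult_comm. rewrite <- rsum_scal.
apply rsum_le; intros i Hi.
unfold mat_vec. eapply Rle_trans; [apply qnorm_qsum|].
rewrite <- rsum_scal. apply rsum_le; intros j Hj.
rewrite qnorm_mul.
pose proof (qnorm_le_vnorm n x j Hj); pose proof (qnorm_ge0 (A i j)); pose proof (qnorm_ge0 (x j)); snra.
Qed.

Lemma vnorm_scal n c y : vnorm n (vscal c y) = Rabs c * vnorm n y.
Proof.
unfold vnorm, vscal.
replace (rsum n (fun i => qnorm2 (qscal c (y i)))) with ((c * c) * rsum n (fun i => qnorm2 (y i))).
- rewrite sqrt_mult_alt; [|apply Rle_0_sqr]. f_equal. apply (sqrt_Rsqr_abs c).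
- rewrite <- rsum_scal. apply rsum_ext; intros; rewrite qnorm2_scal; reflexivity.
Qed.

Lemma mat_vec_scal n A c x i : mat_vec n A (vscal c x) i = qscal c (mat_vec n A x i).
Proof.
unfold mat_vec, vscal. induction n; simpl.
- unfold qscal, qzero; simpl; f_equal; sring.
- rewrite IHn. destruct (qsum n (fun j => qmul (A i j) (x j))), (A i n), (x n). unfold qscal, qmul, qadd; simpl; f_equal; sring.
Qed.

Lemma vdot_scal_l n c v w : vdot n (vscal c v) w = c * vdot n v w.
Proof. unfold vdot, vscal. rewrite <- rsum_scal. apply rsum_ext; intros. destruct (v i), (w i); unfold dot4, qscal; simpl; sring. Qed.

Definition ratio_set n A := fun r => exists x : qvec,
     (exists i, (i < n)%coq_nat /\ x i <> qzero) /\ r = vnorm n (mat_vec n A x) / vnorm n x.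

Definition e0 : qvec := fun i => if Nat.eqb i 0 then qone else qzero.

Lemma e0_nz n : (0 < n)%coq_nat -> exists i, (i < n)%coq_nat /\ e0 i <> qzero.
Proof. intros H; exists 0%nat; split; [exact H|]. unfold e0; simpl. unfold qone, qzero. intros E; injection E; slra. Qed.

Lemma div_ge0 a b : 0 <= a -> 0 <= b -> 0 <= a / b.
Proof.
intros Ha Hb. unfold Rdiv. destruct (Req_dec b 0) as [->|Hb'].
- rewrite Rinv_0 Rmult_0_r; apply Rle_refl.
- apply Rmult_le_pos; [exact Ha| apply Rlt_le, Rinv_0_lt_compat; slra].
Qed.

Lemma opnorm_lub n A : (0 < n)%coq_nat ->
  (forall r, ratio_set n A r -> r <= opnorm n A) /\ (forall b, (forall r, ratio_set n A r -> r <= b) -> opnorm n A <= b).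
Proof.
intros Hn.
destruct (mat_vec_bound n A) as [K [K0 HK]].
assert (Hub : forall r, ratio_set n A r -> r <= K).
{ intros r [x [Hx ->]]. pose proof (vnorm_pos n x Hx).
  apply (Rmult_le_reg_r (vnorm n x)); [exact H|].
  unfold Rdiv. rewrite Rmult_assoc Rinv_l; [|slra]. rewrite Rmult_1_r. apply HK. }
assert (Hne : ratio_set n A (vnorm n (mat_vec n A e0) / vnorm n e0)).
{ exists e0; split; [apply e0_nz; exact Hn| reflexivity]. }
destruct (Lub_Rbar_correct (ratio_set n A)) as [Hl1 Hl2].
unfold opnorm. fold (ratio_set n A).
destruct (Lub_Rbar (ratio_set n A)) as [l| |] eqn:E.
- simpl. split.
  + intros r Hr. exact (Hl1 r Hr).
  + intros b Hb. exact (Hl2 (Rbar.Finite b) Hb).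
- exfalso. specialize (Hl2 (Rbar.Finite K) Hub). simpl in Hl2. exact Hl2.
- exfalso. specialize (Hl1 _ Hne). simpl in Hl1. exact Hl1.
Qed.

Lemma opnorm_ratio n A x : (0 < n)%coq_nat -> (exists i, (i < n)%coq_nat /\ x i <> qzero) ->
  vnorm n (mat_vec n A x) / vnorm n x <= opnorm n A.
Proof. intros Hn Hx. apply (proj1 (opnorm_lub n A Hn)). exists x; split; [exact Hx| reflexivity]. Qed.

Lemma opnorm_vec n A x : (0 < n)%coq_nat -> (exists i, (i < n)%coq_nat /\ x i <> qzero) ->
  vnorm n (mat_vec n A x) <= opnorm n A * vnorm n x.
Proof.
intros Hn Hx. pose proof (vnorm_pos n x Hx). pose proof (opnorm_ratio n A x Hn Hx).
apply (Rmult_le_compat_r (vnorm n x)) in H0; [|slra].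
unfold Rdiv in H0. rewrite Rmult_assoc Rinv_l in H0; [|slra]. rewrite Rmult_1_r in H0. exact H0.
Qed.

Lemma opnorm_ge0 n A : (0 < n)%coq_nat -> 0 <= opnorm n A.
Proof.
intros Hn. eapply Rle_trans; [|apply (opnorm_ratio n A e0 Hn (e0_nz n Hn))].
apply div_ge0; apply vnorm_ge0.
Qed.

Lemma opnorm_approx n A eps : (0 < n)%coq_nat -> 0 < eps ->
  exists x, (exists i, (i < n)%coq_nat /\ x i <> qzero) /\ opnorm n A - eps < vnorm n (mat_vec n A x) / vnorm n x.
Proof.
intros Hn He. destruct (classic (exists x, (exists i, (i < n)%coq_nat /\ x i <> qzero) /\ opnorm n A - eps < vnorm n (mat_vec n A x) / vnorm n x)) as [h|h]; [exact h|].
exfalso.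
assert (Hb : forall r, ratio_set n A r -> r <= opnorm n A - eps).
{ intros r [x [Hx ->]]. destruct (Rle_or_lt (vnorm n (mat_vec n A x) / vnorm n x) (opnorm n A - eps)) as [h'|h']; [exact h'|].
  exfalso; apply h; exists x; split; assumption. }
pose proof (proj2 (opnorm_lub n A Hn) _ Hb). slra.
Qed.

Lemma opnorm_0 A : opnorm 0 A = 0.
Proof.
unfold opnorm. destruct (Lub_Rbar_correct (fun r => exists x : qvec,
     (exists i, (i < 0)%coq_nat /\ x i <> qzero) /\ r = vnorm 0 (mat_vec 0 A x) / vnorm 0 x)) as [_ Hl2].
assert (H : Rbar_le (Lub_Rbar (fun r => exists x : qvec,
     (exists i, (i < 0)%coq_nat /\ x i <> qzero) /\ r = vnorm 0 (mat_vec 0 A x) / vnorm 0 x)) m_infty).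
{ apply Hl2. intros r [x [[i [Hi _]] _]]. apply Nat.nlt_0_r in Hi. contradiction. }
destruct (Lub_Rbar _); simpl in H; try contradiction; reflexivity.
Qed.

End P_q3.
Import P_q3.

Module P_q4.
Local Open Scope R_scope.

Definition unitI (I : quat) := qre I = 0 /\ qi I * qi I + qj I * qj I + qk I * qk I = 1.
Definition SI (I : quat) (z : R[i]) : quat :=
  Quat (cRe z) (cIm z * qi I) (cIm z * qj I) (cIm z * qk I).

Lemma SI_mul I a b : unitI I -> qmul (SI I a) (SI I b) = SI I (a * b)%R.
Proof.
intros [H0 H1]. destruct a as [a1 a2], b as [b1 b2]. rewrite mulcE.
destruct I as [i0 i1 i2 i3]; cbn [qre qi qj qk] in *. subst i0.
unfold SI, qmul; cbn [qre qi qj qk complex.Re complex.Im].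
rewrite -?RmultE -?RplusE -?RminusE -?RoppE.
f_equal.
- transitivity (a1 * b1 - a2 * b2 * (i1 * i1 + i2 * i2 + i3 * i3)); [sring| rewrite H1; sring].
- sring.
- sring.
- sring.
Qed.

Lemma cRe1 : cRe 1%R = 1. Proof. by []. Qed.
Lemma cIm1 : cIm 1%R = 0. Proof. by []. Qed.

Lemma qpow_SI I z k : unitI I -> qpow (SI I z) k = SI I (z ^+ k)%R.
Proof.
intros HI. induction k as [|k IH].
- rewrite expr0. cbn [qpow]. unfold SI, qone. rewrite cRe1 cIm1. f_equal; sring.
- rewrite exprS. cbn [qpow]. rewrite IH. apply SI_mul; exact HI.
Qed.

Lemma dot_SI I z p c x : qre I = 0 ->
  dot4 p (qmul (qmul (SI I z) c) x) = cRe z * dot4 p (qmul c x) + cIm z * dot4 p (qmul (qmul I c) x).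
Proof.
intros H0. destruct I as [i0 i1 i2 i3]; simpl in H0; subst i0.
destruct p, c, x. unfold SI, dot4, qmul; simpl. sring.
Qed.

Lemma qnorm_SI I z : unitI I -> qnorm (SI I z) = cnorm z.
Proof.
intros [H0 H1]. unfold qnorm, cnorm. rewrite -RsqrtE. f_equal.
unfold qnorm2, SI; cbn [qre qi qj qk]. rewrite -!RpowE.
rewrite -?RplusE. transitivity (cRe z ^ 2 + cIm z ^ 2 * (qi I * qi I + qj I * qj I + qk I * qk I)); [sring| rewrite H1; sring].
Qed.

Lemma qnorm_I I c : unitI I -> qnorm (qmul I c) = qnorm c.
Proof.
intros [H0 H1]. rewrite qnorm_mul.
assert (qnorm I = 1) as ->; [|sring].
unfold qnorm, qnorm2. rewrite H0. rewrite <- sqrt_1. f_equal. rewrite <- H1. sring.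
Qed.

Lemma SI_0 I : SI I 0%R = qzero.
Proof. unfold SI, qzero. rewrite cRe0 cIm0. f_equal; apply Rmult_0_l. Qed.

Lemma SI_repr q : exists I z, unitI I /\ q = SI I z.
Proof.
set (t := sqrt (qi q * qi q + qj q * qj q + qk q * qk q)).
assert (Ht : 0 <= qi q * qi q + qj q * qj q + qk q * qk q) by snra.
assert (Htt : t * t = qi q * qi q + qj q * qj q + qk q * qk q) by (apply sqrt_sqrt; exact Ht).
destruct (Req_dec t 0) as [h|h].
- exists (Quat 0 1 0 0), (Complex (qre q) 0). split.
  + unfold unitI; simpl; split; sring.
  + rewrite h in Htt.
    assert (qi q = 0) by snra. assert (qj q = 0) by snra. assert (qk q = 0) by snra.
    destruct q; unfold SI; simpl in *. f_equal; subst; sring.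
- exists (Quat 0 (qi q / t) (qj q / t) (qk q / t)), (Complex (qre q) t). split.
  + unfold unitI; simpl; split; [reflexivity|].
    transitivity ((qi q * qi q + qj q * qj q + qk q * qk q) / (t * t)); [sfield; exact h|].
    rewrite Htt. sfield. intros E; apply h. snra.
  + destruct q; unfold SI; simpl in *. f_equal; sfield; exact h.
Qed.

End P_q4.
Import P_q4.

Module P_bridge.
Local Open Scope ring_scope.

Lemma rsum_big N (f : nat -> R) : rsum N f = \sum_(j < N) f j.
Proof. elim: N => [|N IH] /=; first by rewrite big_ord0. by rewrite big_ord_recr /= IH. Qed.

Lemma cnorm_pt (z0 w om : R[i]) j : `|om| = 1 -> cnorm (z0 + w * om ^+ j) <= cnorm z0 + cnorm w.
Proof.
move=> om1.
have h : `|z0 + w * om ^+ j| <= (cnorm z0 + cnorm w)%:C%C.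
  apply: (le_trans (ler_normD _ _)).
  by rewrite normrM normrX om1 expr1n mulr1 !normcE' rmorphD.
by move: h; rewrite normcE' lecR.
Qed.

Lemma cnorm_ge0' z : Rle 0 (cnorm z).
Proof. apply/RleP; exact: cnorm_ge0. Qed.

Lemma core_bound_R (g d : nat -> R) (K N : nat) (z0 w : R[i]) (D lam : R) :
  (0 < N)%N -> Rle 0 lam -> Rlt lam 1 -> Rle 0 D ->
  (forall k, Rle (Rmult (Rplus (Rabs (g k)) (Rabs (d k))) (pow (Rplus (cnorm z0) (cnorm w)) k)) (Rmult D (pow lam k))) ->
  Rle (Rabs (Rminus (rsum N (fun j => Pk g d K (z0 + w * omega N ^+ j))) (Rmult (INR N) (Pk g d K z0))))
      (Rmult (Rmult (Rmult 2 (INR N)) D) (Rdiv (pow lam N) (Rminus 1 lam))).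
Proof.
move=> N0 l0 l1 D0 H.
have [omN [omP om1]] := @omega_prop N N0.
rewrite rsum_big INRE.
apply/RleP.
have l0' : 0 <= lam by apply/RleP.
have l1' : lam < 1 by apply/RltP.
have D0' : 0 <= D by apply/RleP.
have := @core_bound g d K N z0 w (omega N) D lam N0 omN omP om1 l0' l1' D0'.
rewrite -RpowE.
apply.
move=> k. rewrite -!RpowE. apply/RleP. exact (H k).
Qed.

Lemma cnormM (a b : R[i]) : cnorm (a * b) = cnorm a * cnorm b.
Proof.
have := normrM a b. rewrite !normcE' -rmorphM /=. by case.
Qed.

Lemma cnormC (c : R) : cnorm (c%:C)%C = `|c|.
Proof. by rewrite /cnorm /= expr0n /= addr0 sqrtr_sqr. Qed.

Lemma cnormN (z : R[i]) : cnorm (- z) = cnorm z.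
Proof. by case: z => x y; rewrite /cnorm /= !sqrrN. Qed.

Lemma scal_sub (z : R[i]) (c : R) : z * (c%:C)%C - z = z * ((c - 1)%:C)%C.
Proof. by rewrite rmorphB rmorph1 mulrBr mulr1. Qed.

Lemma cnorm0 : cnorm 0 = 0.
Proof. by rewrite /cnorm /= expr0n /= addr0 sqrtr0. Qed.

End P_bridge.
Import P_bridge.

Module P_q5.
Local Open Scope R_scope.

Lemma Pk_S g d K z : Pk g d (S K) z = Pk g d K z + (cRe (z ^+ K)%R * g K + cIm (z ^+ K)%R * d K).
Proof. unfold Pk. rewrite big_ord_recr. reflexivity. Qed.

Lemma Pk_0 g d z : Pk g d 0 z = 0.
Proof. unfold Pk. rewrite big_ord0. reflexivity. Qed.

Lemma cv_rsum N (f : nat -> nat -> R) (l : nat -> R) :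
  (forall j, (j < N)%coq_nat -> Un_cv (f j) (l j)) -> Un_cv (fun K => rsum N (fun j => f j K)) (rsum N l).
Proof.
induction N; intros H; simpl.
- apply ucv_const.
- apply CV_plus; [apply IHN; intros j Hj; apply H; apply Nat.lt_lt_succ_r; exact Hj| apply H; apply Nat.lt_succ_diag_r].
Qed.

Lemma fin_bound (P : nat -> R -> Prop) m :
  (forall i c c', P i c -> c <= c' -> P i c') ->
  (forall i, (i < m)%coq_nat -> exists c, P i c) -> exists c, 0 <= c /\ forall i, (i < m)%coq_nat -> P i c.
Proof.
intros Hmon. induction m; intros H.
- exists 0; split; [apply Rle_refl| intros i Hi; apply Nat.nlt_0_r in Hi; contradiction].
- destruct IHm as [c [c0 Hc]]; [intros i Hi; apply H; apply Nat.lt_lt_succ_r; exact Hi|].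
  destruct (H m (Nat.lt_succ_diag_r m)) as [c' Hc'].
  exists (Rmax c c'). split; [eapply Rle_trans; [exact c0| apply Rmax_l]|].
  intros i Hi. destruct (Nat.eq_dec i m) as [->|hne].
  + eapply Hmon; [exact Hc'| apply Rmax_r].
  + eapply Hmon; [apply Hc; slia| apply Rmax_l].
Qed.

Lemma pow_lam_N lam : 0 <= lam < 1 -> forall eps, 0 < eps -> exists N, (0 < N)%coq_nat /\ INR N * lam ^ N < eps.
Proof.
intros [l0 l1] eps He.
set (th := sqrt lam).
assert (th0 : 0 <= th) by apply sqrt_pos.
assert (th1 : th < 1) by (unfold th; rewrite <- sqrt_1; apply sqrt_lt_1_alt; split; assumption).
assert (thth : th * th = lam) by (apply sqrt_sqrt; exact l0).
assert (claim : forall N, INR N * th ^ N * (1 - th) <= 1 - th ^ N).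
{ induction N.
  - simpl; slra.
  - rewrite S_INR. simpl pow.
    assert (0 <= th ^ N) by (apply pow_le; exact th0).
    assert (th ^ N <= 1) by (rewrite <- (pow1 N); apply pow_incr; split; slra).
    assert (h : (INR N + 1) * (th * th ^ N) * (1 - th) = th * (INR N * th ^ N * (1 - th)) + th * th ^ N * (1 - th)) by sring.
    rewrite h.
    assert (th * (INR N * th ^ N * (1 - th)) <= th * (1 - th ^ N)) by (apply Rmult_le_compat_l; assumption).
    assert (hP : th * th ^ N <= 1) by snra.
    assert (h2 : th * th ^ N * (1 - th) <= 1 * (1 - th)) by (apply Rmult_le_compat_r; slra).
    assert (h3 : th * (1 - th ^ N) = th - th * th ^ N) by sring.
    assert (h4 : th * th ^ N * (1 - th) = th * th ^ N - th * (th * th ^ N)) by sring.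
    snra. }
destruct (pow_lt_1_zero th) with (y := eps * (1 - th)) as [N0 HN0].
{ rewrite Rabs_pos_eq; assumption. }
{ apply Rmult_lt_0_compat; slra. }
exists (S N0). split; [slia|].
specialize (HN0 (S N0) (Nat.le_succ_diag_r N0)). rewrite Rabs_pos_eq in HN0; [|apply pow_le; exact th0].
specialize (claim (S N0)).
rewrite <- thth, Rpow_mult_distr.
set (p := th ^ S N0) in *.
assert (0 <= p) by (apply pow_le; exact th0).
assert (0 <= INR (S N0)) by apply pos_INR.
assert (INR (S N0) * p <= 1 / (1 - th)).
{ apply (Rmult_le_reg_r (1 - th)); [slra|]. replace (1 / (1 - th) * (1 - th)) with 1 by (sfield; slra). slra. }
assert (INR (S N0) * (p * p) = (INR (S N0) * p) * p) by sring.
rewrite H2.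
apply Rle_lt_trans with (1 / (1 - th) * p); [apply Rmult_le_compat_r; assumption|].
apply (Rmult_lt_reg_r (1 - th)); [slra|].
replace (1 / (1 - th) * p * (1 - th)) with p by (sfield; slra). slra.
Qed.

Section Main.
Variable n : nat.
Variable F : quat -> qmat.
Variable a : nat -> nat -> nat -> quat.
Hypothesis Ha : forall i j q, (i < n)%coq_nat -> (j < n)%coq_nat -> in_ball q ->
   qcv (fun K => qsum K (fun k => qmul (qpow q k) (a i j k))) (F q i j).
Variable M : R.
Hypothesis HM : forall q, in_ball q -> opnorm n (F q) <= M.
Hypothesis Hn : (0 < n)%coq_nat.

Definition Phi v x q := vdot n v (mat_vec n (F q) x).
Definition Fam v x := vnorm n v <= 1 /\ vnorm n x <= 1 /\ exists i, (i < n)%coq_nat /\ x i <> qzero.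
Definition U v x q := M - Phi v x q.
Definition Pr q0 q := forall eta, 0 < eta -> exists del, 0 < del /\
   forall v x, Fam v x -> U v x q0 <= del -> U v x q <= eta.

Lemma ball0 : in_ball qzero.
Proof.
unfold in_ball, qnorm, qnorm2, qzero; simpl.
replace (0 * (0 * 1) + 0 * (0 * 1) + 0 * (0 * 1) + 0 * (0 * 1)) with 0 by sring.
rewrite sqrt_0; slra.
Qed.

Lemma M0 : 0 <= M.
Proof. eapply Rle_trans; [apply (opnorm_ge0 n (F qzero) Hn)| apply HM, ball0]. Qed.

Lemma U_ge0 v x q : Fam v x -> in_ball q -> 0 <= U v x q.
Proof.
intros [Hv [Hx Hnz]] Hq. unfold U, Phi.
pose proof (vdot_CS n v (mat_vec n (F q) x)).
pose proof (opnorm_vec n (F q) x Hn Hnz).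
pose proof (HM q Hq).
pose proof (vnorm_ge0 n v). pose proof (vnorm_ge0 n x). pose proof (vnorm_ge0 n (mat_vec n (F q) x)).
pose proof (opnorm_ge0 n (F q) Hn). pose proof M0.
assert (vnorm n v * vnorm n (mat_vec n (F q) x) <= vnorm n (mat_vec n (F q) x)) by snra.
assert (opnorm n (F q) * vnorm n x <= M) by snra.
slra.
Qed.

Lemma Pr_trans q0 q1 q2 : Pr q0 q1 -> Pr q1 q2 -> Pr q0 q2.
Proof.
intros H1 H2 eta He. destruct (H2 eta He) as [d1 [d1p Hd1]].
destruct (H1 d1 d1p) as [d0 [d0p Hd0]].
exists d0; split; [exact d0p|]. intros v x Hf HU. apply Hd1; [exact Hf|]. apply Hd0; assumption.
Qed.

Definition AK v x q K := vdot n v (fun i => qsum n (fun j => qmul (qsum K (fun k => qmul (qpow q k) (a i j k))) (x j))).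

Lemma AK_cv v x q : in_ball q -> Un_cv (AK v x q) (Phi v x q).
Proof.
intros Hq. unfold AK, Phi, mat_vec.
apply (cv_vdot n v (fun i K => qsum n (fun j => qmul (qsum K (fun k => qmul (qpow q k) (a i j k))) (x j)))).
intros i Hi.
apply (qcv_qsum n (fun j K => qmul (qsum K (fun k => qmul (qpow q k) (a i j k))) (x j))).
intros j Hj. apply qcv_mulr. apply Ha; assumption.
Qed.

Definition gam v x k := rsum n (fun i => rsum n (fun j => dot4 (v i) (qmul (a i j k) (x j)))).
Definition dlt I v x k := rsum n (fun i => rsum n (fun j => dot4 (v i) (qmul (qmul I (a i j k)) (x j)))).

Lemma rsum_zero m : rsum m (fun _ => 0) = 0.
Proof. rewrite rsum_const; sring. Qed.

Lemma AK_Pk I v x z K : unitI I -> AK v x (SI I z) K = Pk (gam v x) (dlt I v x) K z.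
Proof.
intros HI. induction K as [|K IH].
- rewrite Pk_0. unfold AK, vdot. simpl qsum.
  rewrite <- (rsum_zero n). apply rsum_ext; intros i Hi.
  rewrite dot4_qsum. rewrite <- (rsum_zero n). apply rsum_ext; intros j Hj.
  destruct (v i), (x j); unfold dot4, qmul, qzero; simpl; sring.
- rewrite Pk_S. rewrite <- IH. unfold AK.
  set (S := fun i j => qsum K (fun k => qmul (qpow (SI I z) k) (a i j k))).
  set (T := fun i j => qmul (qpow (SI I z) K) (a i j K)).
  transitivity (vdot n v (fun i => qadd (qsum n (fun j => qmul (S i j) (x j))) (qsum n (fun j => qmul (T i j) (x j))))).
  { apply vdot_ext; intros i Hi; split; [reflexivity|].
    rewrite <- qsum_qadd. apply qsum_ext; intros j Hj. unfold S, T. simpl qsum. apply qmul_qadd_l. }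
  rewrite vdot_qadd. f_equal.
  unfold vdot, gam, dlt. rewrite <- !rsum_scal, <- rsum_plus.
  apply rsum_ext; intros i Hi. rewrite dot4_qsum. rewrite <- !rsum_scal, <- rsum_plus.
  apply rsum_ext; intros j Hj. unfold T. rewrite qpow_SI; [|exact HI].
  apply dot_SI. destruct HI; assumption.
Qed.

Lemma Fam_v v x i : Fam v x -> (i < n)%coq_nat -> qnorm (v i) <= 1.
Proof. intros [Hv _] Hi. eapply Rle_trans; [apply qnorm_le_vnorm; exact Hi| exact Hv]. Qed.
Lemma Fam_x v x i : Fam v x -> (i < n)%coq_nat -> qnorm (x i) <= 1.
Proof. intros [_ [Hx _]] Hi. eapply Rle_trans; [apply qnorm_le_vnorm; exact Hi| exact Hx]. Qed.

Lemma dot_bound p c y : qnorm p <= 1 -> qnorm y <= 1 -> Rabs (dot4 p (qmul c y)) <= qnorm c.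
Proof.
intros Hp Hy. eapply Rle_trans; [apply dot4_abs_le|]. rewrite qnorm_mul.
pose proof (qnorm_ge0 p); pose proof (qnorm_ge0 c); pose proof (qnorm_ge0 y).
assert (qnorm p * qnorm y <= 1) by snra.
replace (qnorm p * (qnorm c * qnorm y)) with (qnorm c * (qnorm p * qnorm y)) by sring.
snra.
Qed.

Definition Sa k := rsum n (fun i => rsum n (fun j => qnorm (a i j k))).

Lemma gam_bound v x k : Fam v x -> Rabs (gam v x k) <= Sa k.
Proof.
intros Hf. unfold gam, Sa. eapply Rle_trans; [apply rsum_abs|]. apply rsum_le; intros i Hi.
eapply Rle_trans; [apply rsum_abs|]. apply rsum_le; intros j Hj.
apply dot_bound; [apply (Fam_v v x); assumption| apply (Fam_x v x); assumption].
Qed.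

Lemma dlt_bound I v x k : unitI I -> Fam v x -> Rabs (dlt I v x k) <= Sa k.
Proof.
intros HI Hf. unfold dlt, Sa. eapply Rle_trans; [apply rsum_abs|]. apply rsum_le; intros i Hi.
eapply Rle_trans; [apply rsum_abs|]. apply rsum_le; intros j Hj.
rewrite <- (qnorm_I I (a i j k) HI).
apply dot_bound; [apply (Fam_v v x); assumption| apply (Fam_x v x); assumption].
Qed.

Lemma qpow_real c k : qpow (Quat c 0 0 0) k = Quat (c ^ k) 0 0 0.
Proof.
induction k; simpl; [reflexivity|]. rewrite IHk. unfold qmul; simpl. f_equal; sring.
Qed.

Lemma coef_growth rho : 0 < rho < 1 ->
  exists C, 0 <= C /\ forall i j k, (i < n)%coq_nat -> (j < n)%coq_nat -> qnorm (a i j k) * rho ^ k <= C.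
Proof.
intros [r0 r1].
set (q := Quat rho 0 0 0).
assert (Hq : in_ball q).
{ unfold in_ball, qnorm, qnorm2, q; simpl.
  replace (rho * (rho * 1) + 0 * (0 * 1) + 0 * (0 * 1) + 0 * (0 * 1)) with (rho * rho) by sring.
  rewrite sqrt_square; slra. }
assert (Hij : forall i j, (i < n)%coq_nat -> (j < n)%coq_nat -> exists c, forall k, qnorm (a i j k) * rho ^ k <= c).
{ intros i j Hi Hj. destruct (Ha i j q Hi Hj Hq) as [H1 [H2 [H3 H4]]].
  set (f := fun k => qmul (qpow q k) (a i j k)) in *.
  pose proof (ucv_ext _ _ _ (fun K => qsum_re K f) H1) as G1.
  pose proof (ucv_ext _ _ _ (fun K => qsum_i K f) H2) as G2.
  pose proof (ucv_ext _ _ _ (fun K => qsum_j K f) H3) as G3.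
  pose proof (ucv_ext _ _ _ (fun K => qsum_k K f) H4) as G4.
  destruct (cv_terms_bounded _ _ G1) as [c1 B1].
  destruct (cv_terms_bounded _ _ G2) as [c2 B2].
  destruct (cv_terms_bounded _ _ G3) as [c3 B3].
  destruct (cv_terms_bounded _ _ G4) as [c4 B4].
  exists (c1 + c2 + c3 + c4). intros k.
  assert (E : qnorm (f k) = qnorm (a i j k) * rho ^ k).
  { unfold f, q. rewrite qnorm_mul qpow_real. rewrite Rmult_comm. f_equal.
    unfold qnorm, qnorm2; simpl.
    replace (rho ^ k * (rho ^ k * 1) + 0 * (0 * 1) + 0 * (0 * 1) + 0 * (0 * 1)) with (rho ^ k * rho ^ k) by sring.
    apply sqrt_square. apply pow_le; slra. }
  rewrite <- E. eapply Rle_trans; [apply qnorm_le_abs|].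
  specialize (B1 k); specialize (B2 k); specialize (B3 k); specialize (B4 k). slra. }
destruct (fin_bound (fun i c => forall j k, (j < n)%coq_nat -> qnorm (a i j k) * rho ^ k <= c) n) as [C [C0 HC]].
- intros i c c' H h j k Hj. eapply Rle_trans; [apply H; exact Hj| exact h].
- intros i Hi.
  destruct (fin_bound (fun j c => forall k, qnorm (a i j k) * rho ^ k <= c) n) as [C [C0 HC]].
  + intros j c c' H h k. eapply Rle_trans; [apply H| exact h].
  + intros j Hj. apply Hij; assumption.
  + exists C. intros j k Hj. apply HC; exact Hj.
- exists C. split; [exact C0|]. intros i j k Hi Hj. apply HC; assumption.
Qed.

Lemma rsum_sub_const N c f : rsum N (fun j => c - f j) = INR N * c - rsum N f.
Proof.
induction N; simpl rsum; [simpl; sring|]. rewrite IHN S_INR. sring.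
Qed.

Lemma step I z0 z1 : unitI I -> cnorm z0 + cnorm (z1 - z0)%R < 1 -> Pr (SI I z0) (SI I z1).
Proof.
intros HI Hz eta Heta.
set (w := (z1 - z0)%R) in *.
set (s := cnorm z0) in *. set (r := cnorm w) in *. set (rho := s + r).
assert (s0 : 0 <= s) by apply cnorm_ge0'.
assert (r0 : 0 <= r) by apply cnorm_ge0'.
set (rho' := (1 + rho) / 2).
assert (Hr' : 0 < rho' < 1) by (unfold rho', rho; slra).
destruct (coef_growth rho' Hr') as [C [C0 HC]].
set (lam := rho / rho').
assert (lam0 : 0 <= lam) by (apply div_ge0; unfold rho', rho; slra).
assert (lamE : rho = lam * rho') by (unfold lam; sfield; slra).
assert (lam1 : lam < 1).
{ apply (Rmult_lt_reg_r rho'); [slra|]. rewrite <- lamE. unfold rho', rho; slra. }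
set (D := 2 * (INR n * INR n * C)).
assert (n0 : 0 <= INR n) by apply pos_INR.
assert (D0 : 0 <= D) by (unfold D; apply Rmult_le_pos; [slra| apply Rmult_le_pos; [apply Rmult_le_pos|]; assumption]).
assert (hgd : forall v x, Fam v x -> forall k, (Rabs (gam v x k) + Rabs (dlt I v x k)) * rho ^ k <= D * lam ^ k).
{ intros v x Hf k.
  assert (HS : Sa k * rho' ^ k <= INR n * INR n * C).
  { unfold Sa. rewrite Rmult_comm -rsum_scal.
    rewrite Rmult_assoc -(rsum_const n (INR n * C)).
    apply rsum_le; intros i Hi. rewrite <- rsum_scal, <- rsum_const.
    apply rsum_le; intros j Hj. rewrite Rmult_comm. apply HC; assumption. }
  pose proof (gam_bound v x k Hf). pose proof (dlt_bound I v x k HI Hf).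
  assert (Hp : 0 <= lam ^ k) by (apply pow_le; exact lam0).
  assert (Hp' : 0 <= rho' ^ k) by (apply pow_le; slra).
  rewrite lamE Rpow_mult_distr.
  assert (E : (Rabs (gam v x k) + Rabs (dlt I v x k)) * (lam ^ k * rho' ^ k)
     = lam ^ k * ((Rabs (gam v x k) + Rabs (dlt I v x k)) * rho' ^ k)) by sring.
  rewrite E. unfold D. rewrite (Rmult_comm _ (lam ^ k)).
  apply Rmult_le_compat_l; [exact Hp|].
  assert ((Rabs (gam v x k) + Rabs (dlt I v x k)) * rho' ^ k <= (2 * Sa k) * rho' ^ k)
    by (apply Rmult_le_compat_r; [exact Hp'| slra]).
  slra. }
assert (Heps : 0 < eta * (1 - lam) / (4 * (D + 1))).
{ apply Rdiv_lt_0_compat; [apply Rmult_lt_0_compat; slra| slra]. }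
destruct (pow_lam_N lam (conj lam0 lam1) _ Heps) as [N [N0 HN]].
assert (HNr : 0 < INR N) by (apply lt_0_INR; exact N0).
set (B := 2 * INR N * D * (lam ^ N / (1 - lam))).
assert (HB : B <= eta / 2).
{ set (X := INR N * lam ^ N) in *.
  assert (X0 : 0 <= X) by (apply Rmult_le_pos; [slra| apply pow_le; exact lam0]).
  assert (EB : B = 2 * D * X / (1 - lam)) by (unfold B, X; sfield; slra).
  rewrite EB.
  assert (h1 : X * (4 * (D + 1)) < eta * (1 - lam)).
  { apply (Rmult_lt_compat_r (4 * (D + 1))) in HN; [|slra].
    replace (eta * (1 - lam) / (4 * (D + 1)) * (4 * (D + 1))) with (eta * (1 - lam)) in HN by (sfield; slra).
    exact HN. }
  apply (Rmult_le_reg_r (1 - lam)); [slra|].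
  replace (2 * D * X / (1 - lam) * (1 - lam)) with (2 * D * X) by (sfield; slra).
  assert (2 * D * X <= 2 * (D + 1) * X) by (apply Rmult_le_compat_r; slra).
  slra. }
exists (eta / (2 * INR N)). split; [apply Rdiv_lt_0_compat; slra|].
intros v x Hf HU0.
set (g := gam v x). set (d := dlt I v x).
set (zj := fun j : nat => (z0 + w * omega N ^+ j)%R).
assert (N0' : (0 < N)%N) by (apply/ssrnat.ltP; exact N0).
destruct (omega_prop N N0') as [_ [_ om1]].
assert (Hzj : forall j, in_ball (SI I (zj j))).
{ intros j. unfold in_ball. rewrite qnorm_SI; [|exact HI].
  eapply Rle_lt_trans; [apply/RleP; apply cnorm_pt; exact om1|]. fold s r. exact Hz. }
assert (Hz0 : in_ball (SI I z0)).
{ unfold in_ball. rewrite qnorm_SI; [|exact HI]. fold s. slra. }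
assert (cvz : forall z, in_ball (SI I z) -> Un_cv (fun K => Pk g d K z) (Phi v x (SI I z))).
{ intros z Hzz. eapply ucv_ext; [|apply (AK_cv v x _ Hzz)]. intros K. apply AK_Pk; exact HI. }
assert (cvS : Un_cv (fun K => rsum N (fun j => Pk g d K (zj j)) - INR N * Pk g d K z0)
                    (rsum N (fun j => Phi v x (SI I (zj j))) - INR N * Phi v x (SI I z0))).
{ apply CV_minus.
  - apply (cv_rsum N (fun j K => Pk g d K (zj j))). intros j _. apply cvz, Hzj.
  - apply Un_cv_scal. apply cvz, Hz0. }
assert (Hbnd : Rabs (rsum N (fun j => Phi v x (SI I (zj j))) - INR N * Phi v x (SI I z0)) <= B).
{ apply (cv_abs_le _ _ _ cvS). intros K. unfold B.
  apply (core_bound_R g d K N z0 w D lam N0' lam0 lam1 D0).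
  intros k. fold s r rho. apply hgd; exact Hf. }
assert (Hz1 : SI I (zj 0%nat) = SI I z1).
{ unfold zj, w. f_equal. rewrite GRing.expr0 GRing.mulr1. rewrite (GRing.addrC z0). apply GRing.subrK. }
assert (Hsum : U v x (SI I z1) <= rsum N (fun j => U v x (SI I (zj j)))).
{ rewrite <- Hz1. apply (rsum_term N (fun j => U v x (SI I (zj j))) 0%nat); [|exact N0].
  intros j _. apply U_ge0; [exact Hf| apply Hzj]. }
unfold U at 2 in Hsum. rewrite rsum_sub_const in Hsum.
unfold U in HU0.
pose proof (Rle_abs (- (rsum N (fun j => Phi v x (SI I (zj j))) - INR N * Phi v x (SI I z0)))) as Ha1.
rewrite Rabs_Ropp in Ha1.
assert (HN2 : INR N * (M - Phi v x (SI I z0)) <= INR N * (eta / (2 * INR N))) by (apply Rmult_le_compat_l; slra).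
replace (INR N * (eta / (2 * INR N))) with (eta / 2) in HN2 by (sfield; slra).
slra.
Qed.

Lemma cnormC' c : cnorm (c%:C)%C = Rabs c.
Proof. exact (cnormC c). Qed.

Lemma chain I : unitI I -> forall m z, cnorm z < 1 - / 2 * (2 / 3) ^ m -> Pr (SI I z) (SI I 0%R).
Proof.
intros HI m. induction m as [|m IH]; intros z Hz.
- apply step; [exact HI|]. rewrite GRing.sub0r cnormN. simpl in Hz. slra.
- destruct (Rlt_or_le (cnorm z) (/ 2)) as [h|h].
  + apply step; [exact HI|]. rewrite GRing.sub0r cnormN. slra.
  + set (t := cnorm z) in *.
    assert (Hp : 0 < (2 / 3) ^ m) by (apply pow_lt; slra).
    assert (Hz' : t < 1 - / 2 * (2 / 3) ^ m * (2 / 3)) by (simpl in Hz; slra).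
    set (c := (3 * t - 1) / (2 * t)).
    assert (c0 : 0 < c) by (apply Rdiv_lt_0_compat; slra).
    assert (c1 : c < 1) by (unfold c; apply (Rmult_lt_reg_r (2 * t)); [slra|]; unfold Rdiv; rewrite Rmult_assoc Rinv_l; slra).
    set (z1 := (z * (c%:C)%C)%R).
    apply Pr_trans with (SI I z1).
    * apply step; [exact HI|]. unfold z1. rewrite scal_sub cnormM cnormC'. fold t.
      change ((c - 1)%R) with (Rminus c 1). rewrite Rabs_left; [|slra].
      rewrite -?RmultE -?RoppE -?RminusE -?RplusE. replace (t * - (c - 1)) with ((1 - t) / 2) by (unfold c; sfield; slra).
      slra.
    * apply IH. unfold z1. rewrite cnormM cnormC'. fold t. rewrite Rabs_pos_eq; [|slra].
      rewrite -?RmultE. replace (t * c) with ((3 * t - 1) / 2) by (unfold c; sfield; slra).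
      slra.
Qed.

Lemma Pr_all q0 q : in_ball q0 -> in_ball q -> Pr q0 q.
Proof.
intros H0 H1.
destruct (SI_repr q0) as [I [z [HI ->]]].
destruct (SI_repr q) as [J [z' [HJ ->]]].
unfold in_ball in H0, H1. rewrite qnorm_SI in H0; [|exact HI]. rewrite qnorm_SI in H1; [|exact HJ].
apply Pr_trans with qzero.
- rewrite <- (SI_0 I).
  destruct (pow_lt_1_zero (2/3)) with (y := 2 * (1 - cnorm z)) as [m Hm].
  { rewrite Rabs_pos_eq; slra. }
  { slra. }
  apply (chain I HI m). specialize (Hm m (Nat.le_refl m)).
  rewrite Rabs_pos_eq in Hm; [|apply pow_le; slra]. slra.
- rewrite <- (SI_0 J). apply step; [exact HJ|]. rewrite cnorm0 GRing.subr0. rewrite Rplus_0_l. slra.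
Qed.

Lemma qscal_nz c p : c <> 0 -> p <> qzero -> qscal c p <> qzero.
Proof.
intros Hc Hp E. apply Hp.
assert (h := qnorm2_pos p Hp).
assert (qnorm2 (qscal c p) = 0) by (rewrite E; unfold qnorm2, qzero; simpl; sring).
rewrite qnorm2_scal in H.
assert (0 < c * c) by (apply Rsqr_pos_lt; exact Hc).
exfalso. assert (0 < c * c * qnorm2 p) by (apply Rmult_lt_0_compat; assumption). slra.
Qed.

Lemma final q0 q : opnorm n (F q0) = M -> in_ball q0 -> in_ball q -> M <= opnorm n (F q).
Proof.
intros HM0 Hq0 Hq.
pose proof (Pr_all q0 q Hq0 Hq) as HP.
pose proof M0 as HM0'.
destruct (Req_dec M 0) as [E|E]; [rewrite E; apply opnorm_ge0; exact Hn|].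
assert (Mpos : 0 < M) by slra.
apply Rnot_lt_le; intros Hlt.
set (eta := (M - opnorm n (F q)) / 2).
destruct (HP eta) as [del [del0 Hdel]]; [unfold eta; slra|].
set (eps := Rmin del M).
assert (eps0 : 0 < eps) by (apply Rmin_pos; assumption).
destruct (opnorm_approx n (F q0) eps Hn eps0) as [x [Hx Hr]].
rewrite HM0 in Hr.
set (c := vnorm n x) in *.
assert (c0 : 0 < c) by (apply vnorm_pos; exact Hx).
set (x' := vscal (/ c) x).
assert (Hx'1 : vnorm n x' = 1).
{ unfold x'. rewrite vnorm_scal. fold c. rewrite Rabs_pos_eq; [|apply Rlt_le, Rinv_0_lt_compat; exact c0].
  apply Rinv_l; slra. }
assert (Hx'nz : exists i, (i < n)%coq_nat /\ x' i <> qzero).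
{ destruct Hx as [i [Hi Hxi]]. exists i; split; [exact Hi|]. unfold x', vscal.
  apply qscal_nz; [apply Rinv_neq_0_compat; slra| exact Hxi]. }
set (y := mat_vec n (F q0) x').
assert (Hy : vnorm n y = vnorm n (mat_vec n (F q0) x) / c).
{ unfold y. rewrite (vnorm_ext n _ (vscal (/ c) (mat_vec n (F q0) x))).
  - rewrite vnorm_scal Rabs_pos_eq; [|apply Rlt_le, Rinv_0_lt_compat; exact c0]. unfold Rdiv; sring.
  - intros i _. unfold x'. apply mat_vec_scal. }
set (r0 := vnorm n y) in *.
assert (Hmin : eps <= M) by apply Rmin_r.
assert (Hmin' : eps <= del) by apply Rmin_l.
assert (r0p : 0 < r0) by slra.
set (v := vscal (/ r0) y).
assert (Hv1 : vnorm n v = 1).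
{ unfold v. rewrite vnorm_scal. fold r0. rewrite Rabs_pos_eq; [|apply Rlt_le, Rinv_0_lt_compat; exact r0p].
  apply Rinv_l; slra. }
assert (HF : Fam v x') by (split; [slra| split; [slra| exact Hx'nz]]).
assert (HPhi0 : Phi v x' q0 = r0).
{ unfold Phi. fold y. unfold v. rewrite vdot_scal_l vdot_self. fold r0. sfield. slra. }
assert (HU0 : U v x' q0 <= del) by (unfold U; rewrite HPhi0; slra).
pose proof (Hdel v x' HF HU0) as HU.
unfold U, Phi in HU.
pose proof (vdot_CS n v (mat_vec n (F q) x')) as CS.
rewrite Hv1 in CS.
pose proof (opnorm_vec n (F q) x' Hn Hx'nz) as OV. rewrite Hx'1 in OV.
unfold eta in HU. slra.
Qed.
End Main.

Lemma choice_coef n (F : quat -> qmat) : mat_regular n F ->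
  exists a : nat -> nat -> nat -> quat, forall i j q, (i < n)%coq_nat -> (j < n)%coq_nat -> in_ball q ->
   qcv (fun K => qsum K (fun k => qmul (qpow q k) (a i j k))) (F q i j).
Proof.
intros Hreg.
assert (H : forall i j, exists aij : nat -> quat, (i < n)%coq_nat -> (j < n)%coq_nat -> forall q, in_ball q ->
   qcv (fun K => qsum K (fun k => qmul (qpow q k) (aij k))) (F q i j)).
{ intros i j. destruct (Nat.lt_ge_cases i n) as [hi|hi]; [destruct (Nat.lt_ge_cases j n) as [hj|hj]|].
  - destruct (Hreg i j hi hj) as [aij Haij]. exists aij. intros _ _. exact Haij.
  - exists (fun _ => qzero). intros _ hj'. exfalso; slia.
  - exists (fun _ => qzero). intros hi'. exfalso; slia. }
exists (fun i j => proj1_sig (constructive_indefinite_description _ (H i j))).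
intros i j q Hi Hj Hq.
exact (proj2_sig (constructive_indefinite_description _ (H i j)) Hi Hj q Hq).
Qed.


End P_q5.
Import P_q5.

Local Open Scope R_scope.
Theorem theorem3p3 (n : nat) (F : quat -> qmat) :
  mat_regular n F ->
  (exists q0, in_ball q0 /\ forall q, in_ball q -> opnorm n (F q) <= opnorm n (F q0)) ->
  forall q1 q2, in_ball q1 -> in_ball q2 -> opnorm n (F q1) = opnorm n (F q2).
Proof.
intros Hreg [q0 [Hq0 Hmax]] q1 q2 H1 H2.
destruct n as [|n'].
- rewrite !opnorm_0. reflexivity.
- destruct (choice_coef _ F Hreg) as [a Ha].
  assert (Hn : (0 < S n')%coq_nat) by slia.
  assert (K : forall q, in_ball q -> opnorm (S n') (F q) = opnorm (S n') (F q0)).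
  { intros q Hq. apply Rle_antisym; [apply Hmax; exact Hq|].
    apply (final (S n') F a Ha (opnorm (S n') (F q0)) Hmax Hn q0 q); [reflexivity| exact Hq0| exact Hq]. }
  rewrite (K q1 H1) (K q2 H2). reflexivity.
Qed.
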